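(* Let $f:(X,M_X,N_X)\to(Y,M_Y,N_Y)$ be an isomorphism in the category $\mathsf{EMS}$ between locally determined enhanced measurable spaces. If $(Y,M_Y,N_Y)$ is compact and strictly localizable, then so is $(X,M_X,N_X)$.
   Context: Enhanced measurable space $(X,M,N)$: $M$ a $\sigma$-algebra on $X$, $N\subset M$ closed under arbitrary subsets and countable unions. $\mathsf{EMS}$: morphisms are classes of premaps $f:X'\to Y$ ($X'\subset X$, $X\setminus X'\in N_X$, $f^*M_Y\subset M_X$, $f^*N_Y\subset N_X$), composed as partial maps, modulo $f\approx g$ iff $f^*m\oplus g^*m\in N_X$ for all $m\in M_Y$. Finite measure: countably additive $\mu:M\to\mathbb{C}$ vanishing on $N$; faithful if $\mu$ vanishing on all measurable subsets of $m$ implies $m\in N$. $m\in M$ (or the whole space) is $\sigma$-finite if its induced space $(m,\{m'\in M:m'\subset m\},\{n\in N:n\subset m\})$ admits a faithful finite measure. Strictly localizable: there is a partition $\{X_i\}\subset M$ of $X$ into $\sigma$-finite pieces with $A\in M$ (resp. $N$) iff $A\cap X_i\in M$ (resp. $N$) for all $i$. Compact: there is a compact class $K\subset M$ (every subfamily with the finite intersection property has nonempty intersection) such that every $m\in M\setminus N$ contains some $k\in K\setminus N$. Locally determined: for every $A\subset X$, if $A\cap F\in M$ (resp. $A\cap F\in N$) for all $\sigma$-finite $F\in M$, then $A\in M$ (resp. $A\in N$). *)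

(* Defs.v *)
From Stdlib Require Import Reals List.
From Coquelicot Require Import Coquelicot.
Set Implicit Arguments.

Definition sset (X : Type) := X -> Prop.
Definition ssubset {X} (A B : sset X) := forall x, A x -> B x.
Definition sinter {X} (A B : sset X) : sset X := fun x => A x /\ B x.
Definition scompl {X} (A : sset X) : sset X := fun x => ~ A x.
Definition sfull {X} : sset X := fun _ => True.
Definition sempty {X} : sset X := fun _ => False.
Definition sbigcup {X} (A : nat -> sset X) : sset X := fun x => exists n, A n x.
Definition ssymdiff {X} (A B : sset X) : sset X :=
  fun x => (A x /\ ~ B x) \/ (B x /\ ~ A x).

Record ems (X : Type) := {
  M : sset X -> Prop;
  N : sset X -> Prop;
  M_empty : M sempty;
  M_compl : forall A, M A -> M (scompl A);
  M_bigcup : forall A : nat -> sset X, (forall n, M (A n)) -> M (sbigcup A);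
  N_sub_M : forall A, N A -> M A;
  N_subset : forall A B, N B -> ssubset A B -> N A;
  N_bigcup : forall A : nat -> sset X, (forall n, N (A n)) -> N (sbigcup A)
}.
Arguments M {X}. Arguments N {X}.

(* Premaps X' -> Y (X' ⊆ X) are encoded as X -> option Y; the domain X' is
   the set of x with f x = Some _. *)
Definition dom {X Y} (f : X -> option Y) : sset X := fun x => exists y, f x = Some y.
Definition pre {X Y} (f : X -> option Y) (A : sset Y) : sset X :=
  fun x => exists y, f x = Some y /\ A y.

Definition premap {X Y} (EX : ems X) (EY : ems Y) (f : X -> option Y) : Prop :=
  N EX (scompl (dom f)) /\
  (forall A, M EY A -> M EX (pre f A)) /\
  (forall A, N EY A -> N EX (pre f A)).

Definition pcomp {X Y Z} (g : Y -> option Z) (f : X -> option Y) : X -> option Z :=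
  fun x => match f x with Some y => g y | None => None end.
Definition pid {X} : X -> option X := fun x => Some x.

Definition pequiv {X Y} (EX : ems X) (EY : ems Y) (f g : X -> option Y) : Prop :=
  forall A, M EY A -> N EX (ssymdiff (pre f A) (pre g A)).

Definition ems_iso {X Y} (EX : ems X) (EY : ems Y) (f : X -> option Y) : Prop :=
  premap EX EY f /\
  exists g : Y -> option X, premap EY EX g /\
    pequiv EX EX (pcomp g f) pid /\ pequiv EY EY (pcomp f g) pid.

Definition faithful_finite_measure_on {X} (E : ems X) (m : sset X)
  (mu : sset X -> C) : Prop :=
  (forall A, N E A -> ssubset A m -> mu A = 0%C) /\
  (forall A : nat -> sset X,
      (forall n, M E (A n) /\ ssubset (A n) m) ->
      (forall i j x, i <> j -> A i x -> A j x -> False) ->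
      is_series (fun n => mu (A n)) (mu (sbigcup A))) /\
  (forall B, M E B -> ssubset B m ->
      (forall B', M E B' -> ssubset B' B -> mu B' = 0%C) -> N E B).

Definition sigma_finite_set {X} (E : ems X) (m : sset X) : Prop :=
  M E m /\ exists mu, faithful_finite_measure_on E m mu.

Definition strictly_localizable {X} (E : ems X) : Prop :=
  exists (I : Type) (P : I -> sset X),
    (forall i, M E (P i)) /\
    (forall i j x, P i x -> P j x -> i = j) /\
    (forall x, exists i, P i x) /\
    (forall i, sigma_finite_set E (P i)) /\
    (forall A, M E A <-> forall i, M E (sinter A (P i))) /\
    (forall A, N E A <-> forall i, N E (sinter A (P i))).

Definition finite_inter_property {X} (F : sset X -> Prop) : Prop :=
  forall l : list (sset X), (forall A, In A l -> F A) ->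
    exists x, forall A, In A l -> A x.

Definition compact_class {X} (K : sset X -> Prop) : Prop :=
  forall F : sset X -> Prop, (forall A, F A -> K A) -> (exists A, F A) ->
    finite_inter_property F -> exists x, forall A, F A -> A x.

Definition ems_compact {X} (E : ems X) : Prop :=
  exists K : sset X -> Prop, compact_class K /\ (forall A, K A -> M E A) /\
    (forall m, M E m -> ~ N E m -> exists k, K k /\ ~ N E k /\ ssubset k m).

Definition locally_determined {X} (E : ems X) : Prop :=
  forall A : sset X,
    ((forall F, sigma_finite_set E F -> M E (sinter A F)) -> M E A) /\
    ((forall F, sigma_finite_set E F -> N E (sinter A F)) -> N E A).

(* Main.v *)
Require Import Defs.
From Stdlib Require Import Reals List Lra Lia Classical ClassicalEpsilon FunctionalExtensionality PropExtensionality Arith Cantor.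
From Coquelicot Require Import Coquelicot.
From mathcomp Require classical_sets.
Import Defs.

Lemma sset_ext {X} (A B : sset X) : (forall x, A x <-> B x) -> A = B.
Proof.
intros H; apply functional_extensionality; intros x; apply propositional_extensionality; auto.
Qed.

Definition sunion {X} (A B : sset X) : sset X := fun x => A x \/ B x.
Definition sdiff {X} (A B : sset X) : sset X := fun x => A x /\ ~ B x.

Section Basics.
Context {X : Type} (E : ems X).

Lemma M_ext A B : (forall x, A x <-> B x) -> M E A -> M E B.
Proof. intros H HA; rewrite <- (sset_ext A B H); exact HA. Qed.
Lemma N_ext A B : (forall x, A x <-> B x) -> N E A -> N E B.
Proof. intros H HA; rewrite <- (sset_ext A B H); exact HA. Qed.

Lemma M_full : M E sfull.
Proof.
apply (M_ext (scompl sempty)). intros x; unfold scompl, sempty, sfull; tauto.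
apply M_compl, M_empty.
Qed.

Lemma M_union A B : M E A -> M E B -> M E (sunion A B).
Proof.
intros HA HB.
apply (M_ext (sbigcup (fun n => match n with 0 => A | _ => B end))).
- intros x; unfold sbigcup, sunion; split.
  + intros [[|n] H]; auto.
  + intros [H|H]; [exists 0%nat|exists 1%nat]; auto.
- apply M_bigcup; intros [|n]; auto.
Qed.

Lemma M_inter A B : M E A -> M E B -> M E (sinter A B).
Proof.
intros HA HB.
apply (M_ext (scompl (sunion (scompl A) (scompl B)))).
- intros x; unfold scompl, sunion, sinter; tauto.
- apply M_compl, M_union; apply M_compl; auto.
Qed.

Lemma M_diff A B : M E A -> M E B -> M E (sdiff A B).
Proof. intros; apply M_inter; auto; apply M_compl; auto. Qed.

Lemma M_bigcap (A : nat -> sset X) : (forall n, M E (A n)) -> M E (fun x => forall n, A n x).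
Proof.
intros H.
apply (M_ext (scompl (sbigcup (fun n => scompl (A n))))).
- intros x; unfold scompl, sbigcup; split.
  + intros H1 n. apply NNPP; intros H2; apply H1; exists n; auto.
  + intros H1 [n H2]; auto.
- apply M_compl, M_bigcup; intros n; apply M_compl; auto.
Qed.

Lemma N_union A B : N E A -> N E B -> N E (sunion A B).
Proof.
intros HA HB.
apply (N_ext (sbigcup (fun n => match n with 0 => A | _ => B end))).
- intros x; unfold sbigcup, sunion; split.
  + intros [[|n] H]; auto.
  + intros [H|H]; [exists 0%nat|exists 1%nat]; auto.
- apply N_bigcup; intros [|n]; auto.
Qed.

Lemma N_sub A B : N E B -> (forall x, A x -> B x) -> N E A.
Proof. intros; eapply N_subset; eauto. Qed.

Lemma N_empty Z : N E Z -> N E sempty.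
Proof. intros H; apply (N_sub _ Z H); intros x []. Qed.

Lemma M_of_N A : N E A -> M E A.
Proof. apply N_sub_M. Qed.

Lemma M_list {J} (G : J -> sset X) (L : list J) :
  (forall j, In j L -> M E (G j)) -> M E (fun x => exists j, In j L /\ G j x).
Proof.
induction L as [|a L IH]; intros H.
- apply (M_ext sempty). intros x; split; [intros []|intros [j [[] _]]]. apply M_empty.
- apply (M_ext (sunion (G a) (fun x => exists j, In j L /\ G j x))).
  + intros x; unfold sunion; split.
    * intros [H1|[j [H1 H2]]]; [exists a|exists j]; simpl; auto.
    * intros [j [[<-|H1] H2]]; [left|right]; eauto.
  + apply M_union; [apply H; simpl; auto|apply IH; intros j Hj; apply H; simpl; auto].
Qed.

Lemma N_list {J} (G : J -> sset X) (L : list J) (Z : sset X) : N E Z ->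
  (forall j, In j L -> N E (G j)) -> N E (fun x => exists j, In j L /\ G j x).
Proof.
intros HZ; induction L as [|a L IH]; intros H.
- apply (N_sub _ Z HZ). intros x [j [[] _]].
- apply (N_ext (sunion (G a) (fun x => exists j, In j L /\ G j x))).
  + intros x; unfold sunion; split.
    * intros [H1|[j [H1 H2]]]; [exists a|exists j]; simpl; auto.
    * intros [j [[<-|H1] H2]]; [left|right]; eauto.
  + apply N_union; [apply H; simpl; auto|apply IH; intros j Hj; apply H; simpl; auto].
Qed.

End Basics.

Definition disj {X} (A : nat -> sset X) := forall i j x, i <> j -> A i x -> A j x -> False.

Definition smeas {Y} (E : ems Y) (lam : sset Y -> R) : Prop :=
  (forall A, N E A -> lam A = 0) /\
  (forall A : nat -> sset Y, (forall n, M E (A n)) -> disj A ->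
     is_series (fun n => lam (A n)) (lam (sbigcup A))).

Lemma series_eps (a : nat -> R) l : is_series a l ->
  forall eps, 0 < eps -> exists N0, forall n, (N0 <= n)%nat -> Rabs (sum_n a n - l) < eps.
Proof.
intros H eps He.
unfold is_series in H.
destruct (proj1 (filterlim_locally _ _) H (mkposreal eps He)) as [N0 HN].
exists N0. intros n Hn. apply (HN n Hn).
Qed.

Lemma series_zero_terms (a : nat -> R) l : is_series a l ->
  forall eps, 0 < eps -> exists N0, forall n, (N0 <= n)%nat -> Rabs (a n) < eps.
Proof.
intros H eps He.
destruct (series_eps a l H (eps/2)) as [N0 HN]; [lra|].
exists (S N0). intros n Hn. destruct n as [|n]; [lia|].
assert (E1 := HN n ltac:(lia)). assert (E2 := HN (S n) ltac:(lia)).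
rewrite sum_Sn in E2. change (plus (sum_n a n) (a (S n))) with (sum_n a n + a (S n)) in E2.
apply Rabs_def2 in E1. apply Rabs_def2 in E2. apply Rabs_def1; lra.
Qed.

Lemma sum_n_fst (a : nat -> C) n : fst (sum_n a n) = sum_n (fun k => fst (a k)) n.
Proof.
induction n. rewrite !sum_O; auto.
rewrite !sum_Sn. rewrite <- IHn. destruct (sum_n a n), (a (S n)). reflexivity.
Qed.
Lemma sum_n_snd (a : nat -> C) n : snd (sum_n a n) = sum_n (fun k => snd (a k)) n.
Proof.
induction n. rewrite !sum_O; auto.
rewrite !sum_Sn. rewrite <- IHn. destruct (sum_n a n), (a (S n)). reflexivity.
Qed.

Lemma is_series_fst (a : nat -> C) (l : C) : is_series a l -> is_series (fun n => fst (a n)) (fst l).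
Proof.
intros H. unfold is_series in *. apply filterlim_locally. intros eps.
generalize (proj1 (filterlim_locally _ _) H eps). apply filter_imp.
intros n [H1 H2]. rewrite <- sum_n_fst. exact H1.
Qed.
Lemma is_series_snd (a : nat -> C) (l : C) : is_series a l -> is_series (fun n => snd (a n)) (snd l).
Proof.
intros H. unfold is_series in *. apply filterlim_locally. intros eps.
generalize (proj1 (filterlim_locally _ _) H eps). apply filter_imp.
intros n [H1 H2]. rewrite <- sum_n_snd. exact H2.
Qed.

Lemma is_series_C0 : is_series (fun _ : nat => (0%R,0%R) : C) (0%R,0%R).
Proof.
unfold is_series. apply filterlim_locally. intros eps. exists 0%nat. intros n _.
assert (Hs : forall n, fst (sum_n (fun _ : nat => (0%R, 0%R) : C) n) = 0%R /\ snd (sum_n (fun _ : nat => (0%R, 0%R) : C) n) = 0%R).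
{ intros m; rewrite sum_n_fst, sum_n_snd; simpl. rewrite !sum_n_const; simpl; split; ring. }
destruct (Hs n) as [H1 H2]. split;
 match goal with |- ball _ _ ?t => replace t with 0%R by (symmetry; assumption) end; apply ball_center.
Qed.

Section SMeas.
Context {Y : Type} (E : ems Y) (lam : sset Y -> R) (Hs : smeas E lam) (HN0 : N E sempty).

Lemma lam_empty : lam sempty = 0.
Proof. apply (proj1 Hs), HN0. Qed.

Lemma lam_null A : N E A -> lam A = 0.
Proof. apply (proj1 Hs). Qed.

Lemma lam_add A B : M E A -> M E B -> (forall x, A x -> B x -> False) ->
  lam (sunion A B) = lam A + lam B.
Proof.
intros HA HB HAB.
set (s := fun n : nat => match n with 0 => A | 1 => B | _ => sempty end).
assert (H1 : is_series (fun n => lam (s n)) (lam (sbigcup s))).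
{ apply (proj2 Hs).
  - intros [|[|n]]; simpl; auto. apply M_empty.
  - intros [|[|i]] [|[|j]] x Hij; simpl; try tauto; try (intros ? []); try (intros []);
    try (intros; eapply HAB; eauto). }
assert (E1 : sbigcup s = sunion A B).
{ apply sset_ext; intros x; unfold sbigcup, sunion; split.
  - intros [[|[|n]] H]; simpl in H; auto. destruct H.
  - intros [H|H]; [exists 0%nat|exists 1%nat]; auto. }
rewrite E1 in H1.
assert (H2 : is_series (fun n => lam (s n)) (lam A + lam B)).
{ unfold is_series. apply filterlim_locally. intros eps. exists 1%nat. intros n Hn.
  assert (Hsum : sum_n (fun n => lam (s n)) n = lam A + lam B).
  { induction n as [|n IH]. lia.
    destruct n as [|n].
    - rewrite sum_Sn, sum_O. reflexivity.
    - rewrite sum_Sn, IH by lia. simpl. rewrite lam_empty. change (lam A + lam B + 0 = lam A + lam B). ring. }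
  match goal with |- ball _ _ ?t => replace t with (lam A + lam B) by (symmetry; exact Hsum) end.
  apply ball_center. }
apply is_series_unique in H1. apply is_series_unique in H2. congruence.
Qed.

Lemma lam_split A B : M E A -> M E B -> lam A = lam (sinter A B) + lam (sdiff A B).
Proof.
intros HA HB.
rewrite <- lam_add.
- f_equal. apply sset_ext; intros x; unfold sunion, sinter, sdiff; tauto.
- apply M_inter; auto.
- apply M_diff; auto.
- unfold sinter, sdiff; tauto.
Qed.

Lemma lam_ae A B : M E A -> M E B -> N E (sdiff A B) -> N E (sdiff B A) -> lam A = lam B.
Proof.
intros HA HB H1 H2.
rewrite (lam_split A B HA HB), (lam_split B A HB HA), (lam_null _ H1), (lam_null _ H2).
replace (sinter B A) with (sinter A B). reflexivity.
apply sset_ext; unfold sinter; tauto.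
Qed.

Lemma lam_ae_sub A B : M E A -> M E B -> (forall x, B x -> A x) -> N E (sdiff A B) -> lam A = lam B.
Proof.
intros HA HB H1 H2. apply lam_ae; auto. apply (N_sub E _ sempty HN0). unfold sdiff; intros x [h1 h2]; exact (h2 (H1 x h1)).
Qed.

End SMeas.

Section FromMu.
Context {Y : Type} (E : ems Y) (P : sset Y) (mu : sset Y -> C)
  (Hmu : faithful_finite_measure_on E P mu) (V : sset Y) (HV : M E V) (HVP : ssubset V P).

Lemma smeas_fst : smeas E (fun B => fst (mu (sinter V B))).
Proof.
destruct Hmu as [H1 [H2 H3]]. split.
- intros A HA. rewrite H1. reflexivity.
  apply (N_sub E _ A HA). unfold sinter; tauto.
  intros x [h _]; auto.
- intros A HA Hd.
  assert (Hs := H2 (fun n => sinter V (A n))).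
  replace (sinter V (sbigcup A)) with (sbigcup (fun n => sinter V (A n))).
  apply (is_series_fst (fun n => mu (sinter V (A n)))). apply Hs.
  + intros n; split. apply M_inter; auto. intros x [h _]; auto.
  + intros i j x Hij [_ h1] [_ h2]. exact (Hd i j x Hij h1 h2).
  + apply sset_ext; intros x; unfold sbigcup, sinter; split.
    intros [n [h1 h2]]; split; eauto. intros [h1 [n h2]]; eauto.
Qed.

Lemma smeas_snd : smeas E (fun B => snd (mu (sinter V B))).
Proof.
destruct Hmu as [H1 [H2 H3]]. split.
- intros A HA. rewrite H1. reflexivity.
  apply (N_sub E _ A HA). unfold sinter; tauto.
  intros x [h _]; auto.
- intros A HA Hd.
  assert (Hs := H2 (fun n => sinter V (A n))).
  replace (sinter V (sbigcup A)) with (sbigcup (fun n => sinter V (A n))).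
  apply (is_series_snd (fun n => mu (sinter V (A n)))). apply Hs.
  + intros n; split. apply M_inter; auto. intros x [h _]; auto.
  + intros i j x Hij [_ h1] [_ h2]. exact (Hd i j x Hij h1 h2).
  + apply sset_ext; intros x; unfold sbigcup, sinter; split.
    intros [n [h1 h2]]; split; eauto. intros [h1 [n h2]]; eauto.
Qed.

End FromMu.

Lemma mu_ae {Y : Type} (E : ems Y) (P : sset Y) (mu : sset Y -> C)
  (Hmu : faithful_finite_measure_on E P mu) (HP : M E P) (HN0 : N E sempty) A B :
  M E A -> M E B -> ssubset A P -> ssubset B P -> N E (sdiff A B) -> N E (sdiff B A) -> mu A = mu B.
Proof.
intros HA HB HAP HBP H1 H2.
assert (EA : sinter P A = A) by (apply sset_ext; unfold sinter; intros x; split; [tauto|intros h; split; auto]).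
assert (EB : sinter P B = B) by (apply sset_ext; unfold sinter; intros x; split; [tauto|intros h; split; auto]).
assert (F1 := lam_ae E _ (smeas_fst E P mu Hmu P HP (fun x h => h)) HN0 A B HA HB H1 H2).
assert (F2 := lam_ae E _ (smeas_snd E P mu Hmu P HP (fun x h => h)) HN0 A B HA HB H1 H2).
simpl in F1, F2. rewrite EA, EB in F1, F2.
destruct (mu A), (mu B); simpl in *; congruence.
Qed.

Lemma small_pos (r : R) : r <> 0 -> exists n : nat, / INR (S n) < Rabs r.
Proof.
intros H. assert (Hr : 0 < Rabs r) by (apply Rabs_pos_lt; auto).
destruct (archimed_cor1 _ Hr) as [N0 [h1 h2]].
exists (pred N0). replace (S (pred N0)) with N0 by lia. exact h1.
Qed.

Lemma ccc {Z : Type} (E : ems Z) (F : sset Z) (mu : sset Z -> C) :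
  faithful_finite_measure_on E F mu -> M E F -> N E sempty ->
  forall (J : Type) (Q : J -> sset Z), (forall j, M E (Q j)) ->
  (forall i j x, Q i x -> Q j x -> i = j) ->
  exists l : nat -> list J, forall j, ~ N E (sinter F (Q j)) -> exists n, In j (l n).
Proof.
intros Hmu HF HN0 J Q HQ HQd.
destruct Hmu as [H1 [H2 H3]].
assert (HB : forall j, exists B, ~ N E (sinter F (Q j)) ->
           M E B /\ ssubset B (sinter F (Q j)) /\ mu B <> 0%C).
{ intros j. destruct (classic (N E (sinter F (Q j)))) as [h|h].
  - exists sempty; tauto.
  - apply NNPP; intros hn. apply h. apply H3.
    + apply M_inter; auto.
    + intros x [a _]; auto.
    + intros B' HB' Hsub. apply NNPP; intros hne. apply hn. exists B'. intros _. auto. }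
set (Bf := fun j => proj1_sig (constructive_indefinite_description _ (HB j))).
assert (HBf : forall j, ~ N E (sinter F (Q j)) ->
           M E (Bf j) /\ ssubset (Bf j) (sinter F (Q j)) /\ mu (Bf j) <> 0%C).
{ intros j. exact (proj2_sig (constructive_indefinite_description _ (HB j))). }
set (good := fun n j => ~ N E (sinter F (Q j)) /\
   (/ INR (S n) < Rabs (fst (mu (Bf j))) \/ / INR (S n) < Rabs (snd (mu (Bf j))))).
assert (Hfin : forall n, exists L, forall j, good n j -> In j L).
{ intros n. apply NNPP; intros Hn.
  assert (Hpick : forall L : list J, exists j, good n j /\ ~ In j L).
  { intros L; apply NNPP; intros hL; apply Hn; exists L; intros j hj; apply NNPP; intros hi;
    apply hL; exists j; split; auto. }
  set (pick := fun L => proj1_sig (constructive_indefinite_description _ (Hpick L))).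
  assert (Hpk : forall L, good n (pick L) /\ ~ In (pick L) L).
  { intros L. exact (proj2_sig (constructive_indefinite_description _ (Hpick L))). }
  set (pre := nat_rect (fun _ => list J) nil (fun _ L => pick L :: L)).
  set (a := fun m => pick (pre m)).
  assert (inpre : forall m i, (i < m)%nat -> In (a i) (pre m)).
  { induction m as [|m IH]; intros i Hi. lia.
    change (In (a i) (pick (pre m) :: pre m)).
    destruct (Nat.eq_dec i m) as [->|h]. left; reflexivity. right; apply IH; lia. }
  assert (ainj : forall i j, a i = a j -> i = j).
  { intros i j Hij. destruct (lt_eq_lt_dec i j) as [[h|h]|h]; auto.
    - exfalso. apply (proj2 (Hpk (pre j))). fold (a j). rewrite <- Hij. apply inpre; auto.
    - exfalso. apply (proj2 (Hpk (pre i))). fold (a i). rewrite Hij. apply inpre; auto. }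
  set (D := fun m => Bf (a m)).
  assert (HD : forall m, M E (D m) /\ ssubset (D m) (sinter F (Q (a m)))).
  { intros m. destruct (HBf (a m) (proj1 (proj1 (Hpk (pre m))))) as [h1 [h2 _]]. split; auto. }
  assert (Hser := H2 D).
  assert (Hs : is_series (fun m => mu (D m)) (mu (sbigcup D))).
  { apply Hser.
    - intros m; split; [apply HD|]. intros x hx. apply (proj2 (HD m)) in hx. apply hx.
    - intros i j x Hij hi hj. apply Hij. apply ainj. apply (HQd _ _ x).
      apply (proj2 (HD i)) in hi; apply hi. apply (proj2 (HD j)) in hj; apply hj. }
  assert (Hpos : 0 < / INR (S n)) by (apply Rinv_0_lt_compat, lt_0_INR; lia).
  destruct (series_zero_terms _ _ (is_series_fst _ _ Hs) _ Hpos) as [N1 HN1].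
  destruct (series_zero_terms _ _ (is_series_snd _ _ Hs) _ Hpos) as [N2 HN2].
  set (m := Nat.max N1 N2).
  assert (g := proj1 (Hpk (pre m))). destruct g as [_ [g|g]].
  - assert (h := HN1 m (Nat.le_max_l N1 N2)). cbv beta in h. unfold D, a in h. lra.
  - assert (h := HN2 m (Nat.le_max_r N1 N2)). cbv beta in h. unfold D, a in h. lra. }
exists (fun n => proj1_sig (constructive_indefinite_description _ (Hfin n))).
intros j Hj.
assert (Hg : exists n, good n j).
{ destruct (HBf j Hj) as [_ [_ hne]].
  destruct (Req_dec (fst (mu (Bf j))) 0) as [h1|h1].
  - destruct (Req_dec (snd (mu (Bf j))) 0) as [h2|h2].
    + exfalso; apply hne. destruct (mu (Bf j)) as [r s]; simpl in *; subst; reflexivity.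
    + destruct (small_pos _ h2) as [n hn]. exists n; split; auto.
  - destruct (small_pos _ h1) as [n hn]. exists n; split; auto. }
destruct Hg as [n Hn]. exists n.
exact (proj2_sig (constructive_indefinite_description _ (Hfin n)) j Hn).
Qed.

Lemma my_zorn {T : Type} (P : (T -> Prop) -> Prop) :
  (forall F : (T -> Prop) -> Prop, (forall A, F A -> P A) ->
     (forall A B, F A -> F B -> (forall x, A x -> B x) \/ (forall x, B x -> A x)) ->
     P (fun x => exists A, F A /\ A x)) ->
  exists A, P A /\ forall B, (forall x, A x -> B x) -> ~ (forall x, B x -> A x) -> ~ P B.
Proof.
intros H.
destruct (@classical_sets.Zorn_bigcup T P) as [A [HA HB]].
- intros F HF Htot.
  assert (E : classical_sets.bigcup F (fun X => X) = (fun x => exists A, F A /\ A x)).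
  { apply functional_extensionality. intros x.
    apply propositional_extensionality.
    split. intros [i Fi ix]. eauto. intros [i [Fi ix]]. exists i; auto. }
  rewrite E. apply H. exact HF. exact Htot.
- exists A. split. exact HA. intros B H1 H2 H3. apply (HB B); [|exact H3].
  split. exact H1. intros e. apply H2. intros x Bx. exact (e x Bx).
Qed.

Definition KU {Y} (K : sset Y -> Prop) (u : sset Y) : Prop :=
  exists l : list (sset Y), (forall k, In k l -> K k \/ (forall y, ~ k y)) /\
    (forall y, u y <-> exists k, In k l /\ k y).
Definition KS {Y} (K : sset Y -> Prop) (w : sset Y) : Prop :=
  exists u : nat -> sset Y, (forall n, KU K (u n)) /\ (forall y, w y <-> forall n, u n y).

Section Marczewski.
Context {Y : Type} (K : sset Y -> Prop) (HK : compact_class K).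

Lemma KU_compact : compact_class (KU K).
Proof.
intros F HF [U0 HU0] Hfip.
set (P := fun G : sset Y -> Prop => (forall A, G A -> KU K A) /\
            finite_inter_property (fun A => F A \/ G A)).
assert (HPF : P (fun _ => False)).
{ split. intros A []. intros l hl. apply Hfip. intros A hA. destruct (hl A hA) as [h|[]]; auto. }
destruct (my_zorn P) as [Gs [HGs Hmax]].
{ intros Ch HCh Htot. split.
  - intros A [G [h1 h2]]. exact (proj1 (HCh G h1) A h2).
  - intros l hl.
    assert (Hcol : exists G0, (Ch G0 \/ forall A, ~ G0 A) /\ forall A, In A l -> F A \/ G0 A).
    { clear Hfip HU0. induction l as [|A l IH].
      - exists (fun _ => False). split. right; auto. intros A [].
      - destruct IH as [G0 [h0 h1]]. intros B hB. apply hl; simpl; auto.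
        destruct (hl A (or_introl eq_refl)) as [hA|[G [hG hGA]]].
        + exists G0. split; auto. intros B [<- |hB]; auto.
        + destruct h0 as [h0|h0].
          * destruct (Htot G G0 hG h0) as [s|s].
            -- exists G0. split; auto. intros B [<- |hB]; auto.
            -- exists G. split; auto. intros B [<- |hB]; auto.
               destruct (h1 B hB); auto.
          * exists G. split; auto. intros B [<- |hB]; auto.
            destruct (h1 B hB) as [h|h]; auto. destruct (h0 _ h). }
    destruct Hcol as [G0 [h0 h1]].
    assert (PG0 : P G0). { destruct h0 as [h0|h0]. apply HCh; auto.
      split. intros A hA; destruct (h0 _ hA). intros l' hl'. apply Hfip. intros A hA.
      destruct (hl' A hA) as [h|h]; auto. destruct (h0 _ h). }
    apply (proj2 PG0). exact h1. }
assert (HFG : forall A, F A -> Gs A).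
{ intros A hA. apply NNPP; intros hn.
  apply (Hmax (fun A => F A \/ Gs A)).
  - intros B hB; auto.
  - intros h. apply hn. apply h. left; auto.
  - split. intros B [h|h]. apply HF; auto. apply (proj1 HGs); auto.
    intros l hl. apply (proj2 HGs). intros B hB. destruct (hl B hB) as [h|[h|h]]; auto. }
assert (Hfip2 : finite_inter_property Gs).
{ intros l hl. apply (proj2 HGs). intros A hA; auto. }
assert (Hclaim : forall U l, Gs U -> (forall k, In k l -> K k \/ (forall y, ~ k y)) ->
                 (forall y, U y <-> exists k, In k l /\ k y) -> exists k, In k l /\ Gs k).
{ intros U l hU hl hrep. apply NNPP; intros Hno.
  assert (Hk : forall k, In k l -> exists L', (forall A, In A L' -> Gs A) /\
                 forall x, k x -> (forall A, In A L' -> A x) -> False).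
  { intros k hk. assert (nG : ~ Gs k) by (intros h; apply Hno; exists k; auto).
    assert (nP : ~ P (fun A => Gs A \/ A = k)).
    { apply (Hmax (fun A => Gs A \/ A = k)). intros B hB; auto.
      intros h. apply nG. apply h. right; reflexivity. }
    assert (nfip : ~ finite_inter_property (fun A => F A \/ Gs A \/ A = k)).
    { intros hf; apply nP. split.
      - intros A [h| ->]. apply (proj1 HGs); auto.
        exists (k :: nil). split. intros k' [<- |[]]. apply hl; auto.
        intros y; split. intros h; exists k; simpl; auto. intros [k' [[<- |[]] h]]; auto.
      - intros l' hl'. apply hf. intros A hA. destruct (hl' A hA) as [h|[h|h]]; auto. }
    assert (hL : exists L, (forall A, In A L -> Gs A \/ A = k) /\ ~ exists x, forall A, In A L -> A x).
    { apply NNPP; intros hn. apply nfip. intros L hL. apply NNPP; intros hx. apply hn.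
      exists L. split; auto. intros A hA. destruct (hL A hA) as [h|[h|h]]; auto. }
    destruct hL as [L [hL1 hL2]].
    assert (Hdrop : forall L0, (forall A, In A L0 -> Gs A \/ A = k) -> exists L',
               (forall A, In A L' -> Gs A) /\ forall x, k x -> (forall A, In A L' -> A x) ->
               forall A, In A L0 -> A x).
    { clear hL1 hL2. intros L0. induction L0 as [|B L0 IH]; intros hL.
      - exists nil. split. intros A []. intros x _ _ A [].
      - destruct IH as [L' [h1 h2]]. intros A hA; apply hL; simpl; auto.
        destruct (hL B (or_introl eq_refl)) as [hB| ->].
        + exists (B :: L'). split. intros A [<- |hA]; auto.
          intros x hx hall A [<- |hA]. apply hall; simpl; auto. apply h2; auto. intros A' hA'; apply hall; simpl; auto.
        + exists L'. split; auto. intros x hx hall A [<- |hA]; [exact hx|exact (h2 x hx hall A hA)]. }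
    destruct (Hdrop L hL1) as [L' [h1 h2]]. exists L'. split; auto.
    intros x hx hall. apply hL2. exists x. apply h2; auto. }
  assert (Hcomb : forall l0, (forall k, In k l0 -> In k l) -> exists L'', (forall A, In A L'' -> Gs A) /\
              forall x, (forall A, In A L'' -> A x) -> forall k, In k l0 -> ~ k x).
  { induction l0 as [|k l0 IH]; intros hsub.
    - exists nil. split. intros A []. intros x _ k [].
    - destruct IH as [L1 [h1 h2]]. intros k' hk'; apply hsub; simpl; auto.
      destruct (Hk k (hsub k (or_introl eq_refl))) as [L2 [h3 h4]].
      exists (L2 ++ L1). split. intros A hA; apply in_app_or in hA; destruct hA; auto.
      intros x hall k' [<- |hk'] hx.
      + apply (h4 x hx). intros A hA; apply hall; apply in_or_app; auto.
      + apply (h2 x) with k'; auto. intros A hA; apply hall; apply in_or_app; auto. }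
  destruct (Hcomb l (fun k h => h)) as [L'' [h1 h2]].
  destruct (Hfip2 (U :: L'')) as [x hx].
  { intros A [<- |hA]; auto. }
  destruct (proj1 (hrep x) (hx U (or_introl eq_refl))) as [k [hk hkx]].
  apply (h2 x) with k; auto. intros A hA; apply hx; simpl; auto. }
assert (Hne : forall k, Gs k -> K k \/ (forall y, ~ k y) -> K k).
{ intros k hk [h|h]; auto. destruct (Hfip2 (k :: nil)) as [x hx].
  intros A [<- |[]]; auto. destruct (h x (hx k (or_introl eq_refl))). }
destruct (HK (fun k => Gs k /\ K k)) as [y Hy].
- intros A [_ h]; auto.
- destruct (HF U0 HU0) as [l0 [hl0 hr0]].
  destruct (Hclaim U0 l0 (HFG _ HU0) hl0 hr0) as [k [hk hGk]].
  exists k. split; auto.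
- intros l hl. apply Hfip2. intros A hA. apply hl; auto.
- exists y. intros U hU. destruct (HF U hU) as [l [hl hr]].
  destruct (Hclaim U l (HFG _ hU) hl hr) as [k [hk hGk]].
  apply hr. exists k. split; auto. apply Hy. split; auto.
Qed.

Lemma KS_compact : compact_class (KS K).
Proof.
assert (HKU := KU_compact).
intros F HF [w0 Hw0] Hfip.
set (F' := fun u => KU K u /\ exists w, F w /\ forall y, w y -> u y).
destruct (HKU F') as [y Hy].
- intros u [h _]; auto.
- destruct (HF w0 Hw0) as [u [hu hr]]. exists (u 0%nat). split; auto. exists w0. split; auto.
  intros y hy. apply hr; auto.
- intros l hl.
  assert (Hc : forall l, (forall u, In u l -> F' u) -> exists Lw, (forall w, In w Lw -> F w) /\
                forall y, (forall w, In w Lw -> w y) -> forall u, In u l -> u y).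
  { clear hl. induction l0 as [|u l0 IH]; intros hl0.
    - exists nil. split. intros w []. intros y _ u [].
    - destruct IH as [Lw [h1 h2]]. intros u' hu'; apply hl0; simpl; auto.
      destruct (hl0 u (or_introl eq_refl)) as [_ [w [hw hwu]]].
      exists (w :: Lw). split. intros w' [<- |h]; auto.
      intros y hy u' [<- |hu']. apply hwu, hy; simpl; auto. apply h2; auto.
      intros w' hw'; apply hy; simpl; auto. }
  destruct (Hc l hl) as [Lw [h1 h2]]. destruct (Hfip Lw h1) as [y hy]. exists y. apply h2; auto.
- exists y. intros w hw. destruct (HF w hw) as [u [hu hr]]. apply hr. intros n.
  apply Hy. split; auto. exists w. split; auto. intros y' hy'. apply hr; auto.
Qed.

End Marczewski.

Lemma KU_M {Y} (E : ems Y) (K : sset Y -> Prop) : (forall k, K k -> M E k) -> forall u, KU K u -> M E u.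
Proof.
intros HK u [l [hl hr]]. apply (M_ext E (fun y => exists k, In k l /\ k y)).
intros y; rewrite hr; tauto.
apply (M_list E (fun k => k)). intros k hk. destruct (hl k hk) as [h|h]; auto.
apply (M_ext E sempty). intros y; split; [intros []|intros hy; destruct (h y hy)]. apply M_empty.
Qed.

Lemma KS_M {Y} (E : ems Y) (K : sset Y -> Prop) : (forall k, K k -> M E k) -> forall w, KS K w -> M E w.
Proof.
intros HK w [u [hu hr]]. apply (M_ext E (fun y => forall n, u n y)).
intros y; rewrite hr; tauto.
apply M_bigcap. intros n; apply (KU_M E K HK); auto.
Qed.

Section Exhaust.
Context {Y : Type} (E : ems Y) (K : sset Y -> Prop) (HKM : forall k, K k -> M E k)
  (HKd : forall m, M E m -> ~ N E m -> exists k, K k /\ ~ N E k /\ ssubset k m)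
  (HN0 : N E sempty) (P : sset Y) (mu : sset Y -> C)
  (Hmu : faithful_finite_measure_on E P mu) (HP : M E P).

Lemma Kz_M k : K k \/ (forall y, ~ k y) -> M E k.
Proof.
intros [h|h]; auto. apply (M_ext E sempty). intros y; split; [intros []|intros hy; destruct (h y hy)].
apply M_empty.
Qed.

Lemma exhaust T : M E T -> ssubset T P -> exists e : nat -> sset Y,
  (forall j, K (e j) \/ forall y, ~ e j y) /\ (forall j, ssubset (e j) T) /\ disj e /\
  N E (fun y => T y /\ ~ exists j, e j y).
Proof.
intros HT HTP.
set (PZ := fun D : sset Y -> Prop => (forall A, D A -> K A /\ ~ N E A /\ ssubset A T) /\
             (forall A B y, D A -> D B -> A y -> B y -> A = B)).
destruct (my_zorn PZ) as [Ds [HDs Hmax]].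
{ intros Ch HCh Htot. split.
  - intros A [G [hG hA]]. exact (proj1 (HCh G hG) A hA).
  - intros A B y [G1 [hG1 hA]] [G2 [hG2 hB]] hAy hBy.
    destruct (Htot G1 G2 hG1 hG2) as [s|s].
    + exact (proj2 (HCh G2 hG2) A B y (s A hA) hB hAy hBy).
    + exact (proj2 (HCh G1 hG1) A B y hA (s B hB) hAy hBy). }
set (Q := fun (A : sset Y) y => Ds A /\ A y).
destruct (ccc E P mu Hmu HP HN0 (sset Y) Q) as [l Hl].
{ intros A. destruct (classic (Ds A)) as [h|h].
  - apply (M_ext E A). intros y; unfold Q; tauto. apply HKM, (proj1 HDs A h).
  - apply (M_ext E sempty). intros y; unfold Q, sempty; tauto. apply M_empty. }
{ intros A B y [h1 h2] [h3 h4]. exact (proj2 HDs A B y h1 h3 h2 h4). }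
set (d := fun m => let p := Cantor.of_nat m in nth (snd p) (l (fst p)) sempty).
assert (Hd : forall A, Ds A -> exists m, d m = A).
{ intros A hA. destruct (Hl A) as [n hn].
  - intros hN. apply (proj1 (proj2 (proj1 HDs A hA))).
    apply (N_ext E (sinter P (Q A))); auto. intros y; unfold sinter, Q; split; [tauto|].
    intros hy; repeat split; auto. apply HTP, (proj2 (proj2 (proj1 HDs A hA))); auto.
  - destruct (In_nth _ _ sempty hn) as [k [_ hk]].
    exists (Cantor.to_nat (n, k)). unfold d. rewrite Cantor.cancel_of_to. exact hk. }
set (e := fun m y => Q (d m) y /\ forall m', (m' < m)%nat -> d m' <> d m).
assert (Hcov : forall m y, Ds (d m) -> d m y -> exists j, e j y).
{ intros m. induction m as [m IH] using lt_wf_ind. intros y h1 h2.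
  destruct (classic (forall m', (m' < m)%nat -> d m' <> d m)) as [h|h].
  - exists m. split; auto. split; auto.
  - apply not_all_ex_not in h. destruct h as [m' hm'].
    apply imply_to_and in hm'. destruct hm' as [hlt hne]. apply NNPP in hne.
    apply (IH m' hlt y); rewrite hne; auto. }
assert (He1 : forall j, K (e j) \/ forall y, ~ e j y).
{ intros j. destruct (classic (Ds (d j) /\ forall m', (m' < j)%nat -> d m' <> d j)) as [h|h].
  - left. replace (e j) with (d j). apply (proj1 HDs), h.
    apply sset_ext. intros y; unfold e, Q; tauto.
  - right. intros y hy. apply h. unfold e, Q in hy. tauto. }
assert (He2 : forall j, ssubset (e j) T).
{ intros j y [[h1 h2] _]. apply (proj2 (proj2 (proj1 HDs _ h1))); auto. }
assert (He3 : disj e).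
{ intros i j y hij [[h1 h2] h3] [[h4 h5] h6].
  assert (hq := proj2 HDs _ _ y h1 h4 h2 h5).
  destruct (lt_eq_lt_dec i j) as [[h|h]|h]; [exact (h6 i h hq)|exact (hij h)|exact (h3 j h (eq_sym hq))]. }
exists e. split; [|split; [|split]]; auto.
apply NNPP. intros hR.
assert (HeM : M E (sbigcup e)). { apply M_bigcup. intros j. apply Kz_M, He1. }
destruct (HKd (fun y => T y /\ ~ exists j, e j y)) as [k [hk1 [hk2 hk3]]]; auto.
{ apply (M_ext E (sdiff T (sbigcup e))). intros y; unfold sdiff, sbigcup; tauto. apply M_diff; auto. }
assert (hkD : forall A y, Ds A -> A y -> ~ k y).
{ intros A y hA hAy hky. destruct (Hd A hA) as [m hm]. subst A.
  destruct (Hcov m y hA hAy) as [j hj]. apply (proj2 (hk3 y hky)). exists j; auto. }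
apply (Hmax (fun A => Ds A \/ A = k)).
- intros A hA; auto.
- intros h. assert (hk := h k (or_intror eq_refl)).
  apply hk2. apply (N_sub E k sempty HN0). intros y hy. exact (hkD k y hk hy hy).
- split.
  + intros A [hA| ->]. apply (proj1 HDs); auto. split; auto. split; auto.
    intros y hy. apply (proj1 (hk3 y hy)).
  + intros A B y [hA| ->] [hB| ->] hAy hBy.
    * exact (proj2 HDs A B y hA hB hAy hBy).
    * destruct (hkD A y hA hAy hBy).
    * destruct (hkD B y hB hBy hAy).
    * reflexivity.
Qed.

End Exhaust.

Lemma abs_aux1 a b c : Rabs (a - b) < Rabs c / 2 -> Rabs (b - c) < Rabs c / 2 -> a <> 0.
Proof. intros h1 h2 ->. unfold Rabs in *. repeat destruct Rcase_abs; lra. Qed.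

Lemma abs_aux2 a b c q : 0 < q -> Rabs (b - a) < Rabs c / (2 * q) ->
  Rabs (b - c) < Rabs c / 2 - Rabs c / q -> Rabs (a - c) < Rabs c / 2 - Rabs c / (2 * q).
Proof.
intros hq h1 h2.
assert (e : Rabs c / q = 2 * (Rabs c / (2 * q))) by (field; lra).
rewrite e in h2. set (t := Rabs c / (2 * q)) in *.
unfold Rabs in *. repeat destruct Rcase_abs; lra.
Qed.

Section Approx.
Context {Y : Type} (E : ems Y) (K : sset Y -> Prop) (HKM : forall k, K k -> M E k)
  (HKd : forall m, M E m -> ~ N E m -> exists k, K k /\ ~ N E k /\ ssubset k m)
  (HN0 : N E sempty) (P : sset Y) (mu : sset Y -> C)
  (Hmu : faithful_finite_measure_on E P mu) (HP : M E P)
  (lam : sset Y -> R) (Hlam : smeas E lam).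

Lemma approx T eps : M E T -> ssubset T P -> 0 < eps ->
  exists u, KU K u /\ ssubset u T /\ Rabs (lam T - lam u) < eps.
Proof.
intros HT HTP He.
destruct (exhaust E K HKM HKd HN0 P mu Hmu HP T HT HTP) as [e [He1 [He2 [He3 HR]]]].
set (R0 := fun y => T y /\ ~ exists j, e j y).
set (s := fun n => match n with 0 => R0 | S j => e j end).
assert (HeM : forall j, M E (e j)) by (intros j; apply (Kz_M E K HKM), He1).
assert (Hser : is_series (fun n => lam (s n)) (lam (sbigcup s))).
{ apply (proj2 Hlam).
  - intros [|j]; simpl; auto. apply M_of_N; auto.
  - intros [|i] [|j] y hij; simpl.
    + tauto.
    + intros [_ h] h'. apply h; eauto.
    + intros h' [_ h]. apply h; eauto.
    + apply He3. congruence. }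
replace (sbigcup s) with T in Hser.
2:{ apply sset_ext. intros y; unfold sbigcup; split.
    - intros hy. destruct (classic (exists j, e j y)) as [[j hj]|hn].
      + exists (S j); auto.
      + exists 0%nat; simpl; unfold R0; auto.
    - intros [[|j] hj]; simpl in hj. apply hj. apply (He2 j); auto. }
set (U := fun n y => exists j, (j < n)%nat /\ e j y).
assert (HUM : forall n, M E (U n)).
{ intros n. apply (M_ext E (fun y => exists j, In j (seq 0 n) /\ e j y)).
  intros y; unfold U; split; intros [j [h1 h2]]; exists j; split; auto;
    [apply in_seq in h1; lia| apply in_seq; lia].
  apply M_list; auto. }
assert (Hsum : forall n, sum_n (fun n => lam (s n)) n = lam (U n)).
{ induction n as [|n IH].
  - rewrite sum_O. simpl. rewrite (lam_null E lam Hlam R0 HR).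
    rewrite (lam_null E lam Hlam).
    reflexivity. apply (N_sub E _ sempty HN0). intros y [j [hj _]]. lia.
  - rewrite sum_Sn, IH. change (lam (U n) + lam (e n) = lam (U (S n))).
    rewrite <- (lam_add E lam Hlam HN0); auto.
    + f_equal. apply sset_ext. intros y; unfold sunion, U; split.
      * intros [[j [h1 h2]]|h]. exists j; split; auto. exists n; split; auto.
      * intros [j [h1 h2]]. destruct (Nat.eq_dec j n) as [->|hne]. right; auto.
        left. exists j; split; auto. lia.
    + intros y [j [h1 h2]] h3. apply (He3 j n y); auto. lia. }
destruct (series_eps _ _ Hser eps He) as [N0 HN0'].
exists (U N0). split; [|split].
- exists (map e (seq 0 N0)). split.
  + intros k hk. apply in_map_iff in hk. destruct hk as [j [<- _]]. apply He1.
  + intros y. unfold U. split.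
    * intros [j [h1 h2]]. exists (e j). split; auto. apply in_map_iff. exists j. split; auto. apply in_seq; lia.
    * intros [k [hk hy]]. apply in_map_iff in hk. destruct hk as [j [<- hj]]. apply in_seq in hj.
      exists j. split; auto. lia.
- intros y [j [_ h]]. apply (He2 j); auto.
- assert (h := HN0' N0 (le_n _)).
  match type of h with Rabs (?t - _) < _ => replace t with (lam (U N0)) in h by (symmetry; apply Hsum) end.
  rewrite Rabs_minus_sym. exact h.
Qed.

Lemma invariant_sub (h : Y -> option Y)
  (hM : forall B, M E B -> M E (pre h B))
  (hN : forall B, M E B -> N E (sdiff B (pre h B)))
  (S0 : sset Y) (HS : M E S0) (HSP : ssubset S0 P) (Hc : lam S0 <> 0) :
  exists k, KS K k /\ ssubset k S0 /\ (forall y, k y -> pre h k y) /\ lam k <> 0.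
Proof.
set (c := lam S0).
assert (hc : 0 < Rabs c) by (apply Rabs_pos_lt; auto).
assert (Hstep : forall (u : sset Y) (n : nat), exists u', (M E u /\ ssubset u P) ->
   KU K u' /\ ssubset u' (sinter u (pre h u)) /\
   Rabs (lam (sinter u (pre h u)) - lam u') < Rabs c / (2 * 2 ^ (S (S n)))).
{ intros u n. destruct (classic (M E u /\ ssubset u P)) as [[h1 h2]|hn].
  - destruct (approx (sinter u (pre h u)) (Rabs c / (2 * 2 ^ (S (S n))))) as [u' hu'].
    + apply M_inter; auto.
    + intros y [hy _]; auto.
    + apply Rdiv_lt_0_compat; auto. assert (0 < 2 ^ (S (S n))) by (apply pow_lt; lra). lra.
    + exists u'; auto.
  - exists sempty; tauto. }
set (step := fun u n => proj1_sig (constructive_indefinite_description _ (Hstep u n))).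
assert (Hst : forall u n, (M E u /\ ssubset u P) ->
   KU K (step u n) /\ ssubset (step u n) (sinter u (pre h u)) /\
   Rabs (lam (sinter u (pre h u)) - lam (step u n)) < Rabs c / (2 * 2 ^ (S (S n)))).
{ intros u n. exact (proj2_sig (constructive_indefinite_description _ (Hstep u n))). }
destruct (approx S0 (Rabs c / (2 * 2 ^ 1))) as [u0 [hu01 [hu02 hu03]]]; auto.
{ apply Rdiv_lt_0_compat; auto. simpl; lra. }
set (useq := nat_rect (fun _ => sset Y) u0 (fun n u => step u n)).
assert (Hinv : forall n, KU K (useq n) /\ M E (useq n) /\ ssubset (useq n) S0 /\
   Rabs (lam (useq n) - c) < Rabs c / 2 - Rabs c / (2 * 2 ^ (S n))).
{ induction n as [|n [h1 [h2 [h3 h4]]]].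
  - split; [|split; [|split]]; auto. apply (KU_M E K HKM); auto.
    rewrite Rabs_minus_sym. simpl. simpl in hu03.
    replace (Rabs c / 2 - Rabs c / (2 * (2 * 1))) with (Rabs c / (2 * (2 * 1))) by field. exact hu03.
  - change (useq (S n)) with (step (useq n) n).
    assert (hu : M E (useq n) /\ ssubset (useq n) P) by (split; auto; intros y hy; apply HSP, h3, hy).
    destruct (Hst (useq n) n hu) as [g1 [g2 g3]].
    assert (Heq : lam (sinter (useq n) (pre h (useq n))) = lam (useq n)).
    { symmetry. apply (lam_ae_sub E lam Hlam HN0); auto. apply M_inter; auto.
      intros y [hy _]; auto.
      apply (N_ext E (sdiff (useq n) (pre h (useq n)))); auto.
      intros y; unfold sdiff, sinter; tauto. }
    rewrite Heq in g3.
    split; [|split; [|split]]; auto.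
    + apply (KU_M E K HKM); auto.
    + intros y hy. apply h3. apply (proj1 (g2 y hy)).
    + apply (abs_aux2 _ (lam (useq n))); auto. apply pow_lt; lra. }
assert (HuM : forall n, M E (useq n)) by (intros n; apply (Hinv n)).
assert (Hnest : forall n y, useq (S n) y -> useq n y /\ pre h (useq n) y).
{ intros n y hy. change (useq (S n)) with (step (useq n) n) in hy.
  destruct (Hinv n) as [h1 [h2 [h3 _]]].
  assert (hu : M E (useq n) /\ ssubset (useq n) P) by (split; auto; intros z hz; apply HSP, h3, hz).
  exact (proj1 (proj2 (Hst (useq n) n hu)) y hy). }
assert (Hmono : forall a b y, (a <= b)%nat -> useq b y -> useq a y).
{ intros a b y hab. induction hab; auto. intros hy. apply IHhab. apply (Hnest m y hy). }
set (k := fun y => forall n, useq n y).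
exists k. split; [|split; [|split]].
- exists useq. split. intros n; apply (Hinv n). intros y; unfold k; tauto.
- intros y hy. apply (proj1 (proj2 (proj2 (Hinv 0%nat)))). apply hy.
- intros y hy. destruct (proj2 (Hnest 0%nat y (hy 1%nat))) as [z [hz1 hz2]].
  exists z. split; auto. intros n. destruct (proj2 (Hnest n y (hy (S n)))) as [z' [hz1' hz2']].
  rewrite hz1 in hz1'. injection hz1' as ->. auto.
- set (s := fun n => match n with 0 => k | S n => sdiff (useq n) (useq (S n)) end).
  assert (HkM : M E k). { apply M_bigcap. intros n; apply HuM. }
  assert (Hser : is_series (fun n => lam (s n)) (lam (sbigcup s))).
  { apply (proj2 Hlam).
    - intros [|n]; [exact HkM| apply M_diff; [apply HuM | exact (HuM (S n))]].
    - intros [|i] [|j] y hij; simpl.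
      + tauto.
      + intros hk [_ h']. exact (h' (hk (S j))).
      + intros [_ h'] hk. exact (h' (hk (S i))).
      + intros [h1 h2] [h3 h4]. destruct (lt_eq_lt_dec i j) as [[hl|hl]|hl].
        * exact (h2 (Hmono (S i) j y hl h3)).
        * apply hij; congruence.
        * exact (h4 (Hmono (S j) i y hl h1)). }
  replace (sbigcup s) with (useq 0%nat) in Hser.
  2:{ apply sset_ext. intros y; unfold sbigcup; split.
      - intros hy. apply NNPP; intros hn.
        assert (hall : forall n, useq n y).
        { induction n as [|n IH]; auto. apply NNPP; intros hn'. apply hn. exists (S n). simpl. split; auto. }
        apply hn. exists 0%nat. simpl. exact hall.
      - intros [[|n] hn]; simpl in hn. apply hn. apply (Hmono 0%nat n); [lia|apply hn]. }
  assert (Hsum : forall n, sum_n (fun n => lam (s n)) n = lam k + lam (useq 0%nat) - lam (useq n)).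
  { induction n as [|n IH].
    - rewrite sum_O. simpl. ring.
    - rewrite sum_Sn, IH. change (lam k + lam (useq 0%nat) - lam (useq n) + lam (sdiff (useq n) (useq (S n))) =
          lam k + lam (useq 0%nat) - lam (useq (S n))).
      rewrite (lam_split E lam Hlam HN0 (useq n) (useq (S n))); try apply HuM.
      replace (sinter (useq n) (useq (S n))) with (useq (S n)). ring.
      apply sset_ext; intros y; unfold sinter; split. intros hy; split; auto. apply (Hnest n y hy). tauto. }
  assert (he : 0 < Rabs c / 2) by lra.
  destruct (series_eps _ _ Hser _ he) as [N1 HN1].
  assert (hq := HN1 N1 (le_n _)).
  match type of hq with Rabs (?t - _) < _ => replace t with (lam k + lam (useq 0%nat) - lam (useq N1)) in hq by (symmetry; apply Hsum) end.
  replace (lam k + lam (useq 0%nat) - lam (useq N1) - lam (useq 0%nat)) with (lam k - lam (useq N1)) in hq by ring.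
  apply (abs_aux1 _ (lam (useq N1)) c); auto.
  destruct (Hinv N1) as [_ [_ [_ h4]]].
  assert (0 < Rabs c / (2 * 2 ^ (S N1))).
  { apply Rdiv_lt_0_compat; auto. assert (0 < 2 ^ (S N1)) by (apply pow_lt; lra). lra. }
  lra.
Qed.

End Approx.

Lemma pre_pcomp {A B C} (g : B -> option C) (f : A -> option B) S x :
  pre (pcomp g f) S x <-> pre f (pre g S) x.
Proof.
unfold pre, pcomp. destruct (f x) as [b|]; split.
- intros [c [h1 h2]]; exists b; split; auto; exists c; auto.
- intros [b' [h1 [c [h2 h3]]]]. injection h1 as <-. exists c; auto.
- intros [c [h _]]; discriminate.
- intros [b' [h _]]; discriminate.
Qed.

Lemma pre_pid {A} (S : sset A) x : pre pid S x <-> S x.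
Proof. unfold pre, pid. split. intros [y [h1 h2]]; injection h1 as <-; auto. intros h; exists x; auto. Qed.

Lemma pequiv_1 {A} (E : ems A) (h : A -> option A) : pequiv E E h pid ->
  forall B, M E B -> N E (sdiff B (pre h B)).
Proof.
intros H B HB. apply (N_sub E _ _ (H B HB)). intros y [h1 h2]. right. split; auto. apply pre_pid; auto.
Qed.
Lemma pequiv_2 {A} (E : ems A) (h : A -> option A) : pequiv E E h pid ->
  forall B, M E B -> N E (sdiff (pre h B) B).
Proof.
intros H B HB. apply (N_sub E _ _ (H B HB)). intros y [h1 h2]. left. split; auto. rewrite pre_pid; auto.
Qed.

Section Iso.
Context {X Y : Type} (EX : ems X) (EY : ems Y) (f : X -> option Y) (g : Y -> option X)
  (Hf : premap EX EY f) (Hg : premap EY EX g)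
  (Hgf : pequiv EX EX (pcomp g f) pid) (Hfg : pequiv EY EY (pcomp f g) pid).

Let fM := proj1 (proj2 Hf).
Let fN := proj2 (proj2 Hf).
Let gM := proj1 (proj2 Hg).
Let gN := proj2 (proj2 Hg).

Lemma HN0X : N EX sempty.
Proof. apply (N_empty EX _ (proj1 Hf)). Qed.
Lemma HN0Y : N EY sempty.
Proof. apply (N_empty EY _ (proj1 Hg)). Qed.

Lemma hM : forall B, M EY B -> M EY (pre (pcomp f g) B).
Proof.
intros B HB. apply (M_ext EY (pre g (pre f B))). intros y; rewrite pre_pcomp; tauto.
apply gM, fM, HB.
Qed.

Lemma compact_X : ems_compact EY -> strictly_localizable EY -> ems_compact EX.
Proof.
intros [K [HKc [HKM HKd]]] [I [P [PM [Pdisj [Pcov [Psf [PMc PNc]]]]]]].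
exists (fun A => M EX A /\ exists k, KS K k /\ (forall y, k y -> pre g A y) /\ (forall x, A x -> pre f k x)).
split; [|split].
- intros F HF [A0 HA0] Hfip.
  set (F' := fun k => KS K k /\ exists A, F A /\ (forall y, k y -> pre g A y) /\ (forall x, A x -> pre f k x)).
  destruct (HF A0 HA0) as [_ [k0 [hk01 [hk02 hk03]]]].
  destruct (KS_compact K HKc F') as [y Hy].
  + intros k [h _]; auto.
  + exists k0. split; auto. exists A0; auto.
  + intros l hl.
    assert (Hc : forall l, (forall k, In k l -> F' k) -> exists LA, (forall A, In A LA -> F A) /\
               forall x, (forall A, In A LA -> A x) -> forall k, In k l -> pre f k x).
    { clear hl. intros l0; induction l0 as [|k l0 IH]; intros hl0.
      - exists nil. split. intros A []. intros x _ k [].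
      - destruct IH as [LA [h1 h2]]. intros k' hk'; apply hl0; simpl; auto.
        destruct (hl0 k (or_introl eq_refl)) as [_ [A [hA [_ hAk]]]].
        exists (A :: LA). split. intros A' [<- |h]; auto.
        intros x hx k' [<- |hk']. apply hAk, hx; simpl; auto. apply h2; auto.
        intros A' hA'; apply hx; simpl; auto. }
    destruct (Hc l hl) as [LA [h1 h2]].
    destruct (Hfip (A0 :: LA)) as [x hx].
    { intros A [<- |hA]; auto. }
    destruct (hk03 x (hx A0 (or_introl eq_refl))) as [y0 [hy0 _]].
    exists y0. intros k hk. destruct (h2 x (fun A hA => hx A (or_intror hA)) k hk) as [y1 [hy1 hy2]].
    rewrite hy0 in hy1. injection hy1 as ->. auto.
  + destruct (hk02 y (Hy k0 (conj hk01 (ex_intro _ A0 (conj HA0 (conj hk02 hk03)))))) as [x0 [hx0 _]].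
    exists x0. intros A hA. destruct (HF A hA) as [_ [k [hk1 [hk2 hk3]]]].
    destruct (hk2 y (Hy k (conj hk1 (ex_intro _ A (conj hA (conj hk2 hk3)))))) as [x1 [hx1 hx2]].
    rewrite hx0 in hx1. injection hx1 as <-. auto.
- intros A [hA _]; auto.
- intros m Hm Hnm.
  set (S0 := pre g m).
  assert (HS0 : M EY S0) by (apply gM; auto).
  assert (HnS0 : ~ N EY S0).
  { intros hN. apply Hnm. apply (N_sub EX _ (sunion (pre f S0) (sdiff m (pre (pcomp g f) m)))).
    - apply N_union. apply fN; auto. apply (pequiv_1 EX _ Hgf); auto.
    - intros x hx. destruct (classic (pre (pcomp g f) m x)) as [h|h].
      + left. apply pre_pcomp in h. exact h.
      + right. split; auto. }
  assert (Hi : exists i, ~ N EY (sinter S0 (P i))).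
  { apply NNPP; intros hn. apply HnS0. apply PNc. intros i. apply NNPP; intros h. apply hn. exists i; auto. }
  destruct Hi as [i Hi].
  set (S := sinter S0 (P i)).
  assert (HSM : M EY S) by (apply M_inter; auto).
  assert (HSP : ssubset S (P i)) by (intros y [_ h]; auto).
  destruct (Psf i) as [_ [mu Hmu]].
  assert (HV : exists V, M EY V /\ ssubset V S /\ mu V <> 0%C).
  { apply NNPP; intros hn. apply Hi. apply (proj2 (proj2 Hmu)); auto.
    intros B' hB' hsub. apply NNPP; intros hne. apply hn. exists B'. auto. }
  destruct HV as [V [HVM [HVS HVne]]].
  assert (HVP : ssubset V (P i)) by (intros y hy; apply HSP, HVS, hy).
  assert (Hlam : exists lam, smeas EY lam /\ lam S <> 0).
  { assert (ES : sinter V S = V).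
    { apply sset_ext. intros y; unfold sinter; split. tauto. intros hy; split; auto. }
    destruct (Req_dec (fst (mu V)) 0) as [h1|h1].
    - destruct (Req_dec (snd (mu V)) 0) as [h2|h2].
      + exfalso; apply HVne. destruct (mu V) as [r s]; simpl in *; subst; reflexivity.
      + exists (fun B => snd (mu (sinter V B))). split. apply (smeas_snd EY (P i)); auto.
        rewrite ES. auto.
    - exists (fun B => fst (mu (sinter V B))). split. apply (smeas_fst EY (P i)); auto.
      rewrite ES. auto. }
  destruct Hlam as [lam [Hlam HlamS]].
  destruct (invariant_sub EY K HKM HKd HN0Y (P i) mu Hmu (PM i) lam Hlam (pcomp f g) hM
             (pequiv_1 EY _ Hfg) S HSM HSP HlamS) as [k [hk1 [hk2 [hk3 hk4]]]].
  assert (HkM : M EY k) by (apply (KS_M EY K HKM); auto).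
  exists (sinter (pre f k) m). split; [split; [|exists k; split; [|split]]|split].
  + apply M_inter; auto.
  + auto.
  + intros y hy. destruct (proj1 (hk2 y hy)) as [x [hx1 hx2]].
    exists x. split; auto. split; auto.
    assert (h3 := hk3 y hy). apply pre_pcomp in h3. destruct h3 as [x' [hx' hx'']]. rewrite hx1 in hx'. injection hx' as <-. auto.
  + intros x [hx _]; auto.
  + intros hN. apply hk4. apply (lam_null EY lam Hlam).
    apply (N_sub EY _ (pre g (sinter (pre f k) m))). apply gN; auto.
    intros y hy. destruct (proj1 (hk2 y hy)) as [x [hx1 hx2]].
    exists x. split; auto. split; auto.
    assert (h3 := hk3 y hy). apply pre_pcomp in h3. destruct h3 as [x' [hx' hx'']]. rewrite hx1 in hx'. injection hx' as <-. auto.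
  + intros x [_ h]; auto.
Qed.


Lemma sl_X : locally_determined EX -> strictly_localizable EY -> strictly_localizable EX.
Proof.
intros LDX [I [P [PM [Pdisj [Pcov [Psf [PMc PNc]]]]]]].
assert (HN0X := HN0X). assert (HN0Y := HN0Y).
set (Q := fun j : option I => match j with None => scompl (dom f) | Some i => pre f (P i) end).
assert (HQM : forall j, M EX (Q j)).
{ intros [i|]; simpl. apply fM, PM. apply M_of_N, (proj1 Hf). }
assert (HQd : forall i j x, Q i x -> Q j x -> i = j).
{ intros [i|] [j|] x; simpl; auto.
  - intros [y1 [h1 h2]] [y2 [h3 h4]]. rewrite h1 in h3. injection h3 as <-. f_equal. apply (Pdisj i j y1); auto.
  - intros [y1 [h1 h2]] h. destruct h. exists y1; auto.
  - intros h [y1 [h1 h2]]. destruct h. exists y1; auto. }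
assert (Ylem : forall R, M EX R -> (forall i, N EX (sinter R (pre f (P i)))) -> N EX R).
{ intros R HR HRi.
  assert (Hg0 : N EY (pre g R)).
  { apply PNc. intros i.
    apply (N_sub EY _ (sunion (pre g (sinter R (pre f (P i)))) (sdiff (P i) (pre (pcomp f g) (P i))))).
    - apply N_union. apply gN, HRi. apply (pequiv_1 EY _ Hfg), PM.
    - intros y [[x [hx1 hx2]] hy]. destruct (classic (pre (pcomp f g) (P i) y)) as [h|h].
      + left. apply pre_pcomp in h. destruct h as [x' [hx' hx'']]. rewrite hx1 in hx'. injection hx' as <-.
        exists x. split; auto. split; auto.
      + right. split; auto. }
  apply (N_sub EX _ (sunion (pre f (pre g R)) (sdiff R (pre (pcomp g f) R)))).
  - apply N_union. apply fN; auto. apply (pequiv_1 EX _ Hgf); auto.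
  - intros x hx. destruct (classic (pre (pcomp g f) R x)) as [h|h].
    + left. apply pre_pcomp in h. exact h.
    + right. split; auto. }
assert (Hcov : forall F, sigma_finite_set EX F -> exists l : nat -> list (option I),
   M EX (fun x => exists n j, In j (l n) /\ Q j x) /\
   N EX (fun x => F x /\ ~ exists n j, In j (l n) /\ Q j x)).
{ intros F [HFM [nu Hnu]].
  destruct (ccc EX F nu Hnu HFM HN0X (option I) Q HQM HQd) as [l Hl].
  exists l.
  assert (HUM : M EX (fun x => exists n j, In j (l n) /\ Q j x)).
  { apply (M_ext EX (sbigcup (fun n x => exists j, In j (l n) /\ Q j x))).
    intros x; unfold sbigcup; tauto.
    apply M_bigcup. intros n. apply M_list. intros j _; auto. }
  split; auto.
  apply Ylem.
  - apply (M_ext EX (sdiff F (fun x => exists n j, In j (l n) /\ Q j x))). intros x; unfold sdiff; tauto.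
    apply M_diff; auto.
  - intros i. destruct (classic (exists n, In (Some i) (l n))) as [[n hn]|hn].
    + apply (N_sub EX _ sempty HN0X). intros x [[_ h] h']. apply h. exists n, (Some i). auto.
    + assert (hN : N EX (sinter F (Q (Some i)))).
      { apply NNPP; intros h. apply hn. apply Hl; auto. }
      apply (N_sub EX _ _ hN). intros x [[h _] h']. split; auto. }
exists (option I), Q. split; [|split; [|split; [|split; [|split]]]].
- exact HQM.
- exact HQd.
- intros x. destruct (f x) as [y|] eqn:e.
  + destruct (Pcov y) as [i hi]. exists (Some i). exists y; auto.
  + exists None. intros [y hy]. congruence.
- intros [i|].
  + destruct (Psf i) as [HPi [mu Hmu]].
    split. apply HQM.
    exists (fun A => mu (sinter (pre g A) (P i))).
    split; [|split].
    * intros A HA HAQ. apply (proj1 Hmu).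
      apply (N_sub EY _ (pre g A)). apply gN; auto. intros y [h _]; auto.
      intros y [_ h]; auto.
    * intros A HA Hd.
      assert (Hs := proj1 (proj2 Hmu) (fun n => sinter (pre g (A n)) (P i))).
      replace (sinter (pre g (sbigcup A)) (P i)) with (sbigcup (fun n => sinter (pre g (A n)) (P i))).
      apply Hs.
      -- intros n. split. apply M_inter; auto. apply gM, (HA n). intros y [_ h]; auto.
      -- intros a b y hab [[x1 [h1 h2]] _] [[x2 [h3 h4]] _]. rewrite h1 in h3. injection h3 as <-.
         exact (Hd a b x1 hab h2 h4).
      -- apply sset_ext. intros y; unfold sbigcup, sinter, pre; split.
         ++ intros [n [[x [h1 h2]] h3]]. split; auto. exists x; split; auto. exists n; auto.
         ++ intros [[x [h1 [n h2]]] h3]. exists n. split; auto. exists x; auto.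
    * intros B HB HBQ Hz.
      set (C := sinter (pre g B) (P i)).
      assert (HCM : M EY C) by (apply M_inter; auto).
      assert (HCN : N EY C).
      { apply (proj2 (proj2 Hmu)); auto. intros y [_ h]; auto.
        intros C' HC' HC'C.
        set (B' := sinter (pre f C') B).
        assert (HB'M : M EX B') by (apply M_inter; auto).
        assert (h0 := Hz B' HB'M (fun x hx => proj2 hx)). cbv beta in h0.
        rewrite <- h0. apply (mu_ae EY (P i) mu Hmu HPi HN0Y); auto.
        - apply M_inter; auto.
        - intros y hy. apply (proj2 (HC'C y hy)).
        - intros y [_ h]; auto.
        - apply (N_sub EY _ _ (pequiv_1 EY _ Hfg C' HC')).
          intros y [hy1 hy2]. split; auto. intros h. apply hy2.
          destruct (HC'C y hy1) as [[x [hx1 hx2]] hy3].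
          apply pre_pcomp in h. destruct h as [x' [hx' hx'']]. rewrite hx1 in hx'. injection hx' as <-.
          split; auto. exists x. split; auto. split; auto.
        - apply (N_sub EY _ _ (pequiv_2 EY _ Hfg C' HC')).
          intros y [[[x [hx1 [hx2 hx3]]] hy] hy2]. split; auto.
          apply pre_pcomp. exists x. split; auto. }
      apply (N_sub EX _ (sunion (pre f C) (sdiff B (pre (pcomp g f) B)))).
      -- apply N_union. apply fN; auto. apply (pequiv_1 EX _ Hgf); auto.
      -- intros x hx. destruct (classic (pre (pcomp g f) B x)) as [h|h].
         ++ left. apply pre_pcomp in h. destruct h as [y [hy1 hy2]].
            exists y. split; auto. split; auto.
            destruct (HBQ x hx) as [y' [hy1' hy2']]. rewrite hy1 in hy1'. injection hy1' as <-. auto.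
         ++ right. split; auto.
  + split. apply HQM. exists (fun _ => 0%C). split; [|split].
    * intros; reflexivity.
    * intros A _ _. exact is_series_C0.
    * intros B _ HBQ _. apply (N_sub EX _ _ (proj1 Hf)). exact HBQ.
- intros A. split.
  + intros HA j. apply M_inter; auto.
  + intros HA. apply (proj1 (LDX A)). intros F HF.
    destruct (Hcov F HF) as [l [HUM HRN]].
    destruct HF as [HFM _].
    apply (M_ext EX (sunion (sbigcup (fun n x => exists j, In j (l n) /\ (sinter A (Q j) x /\ F x)))
                            (sinter A (fun x => F x /\ ~ exists n j, In j (l n) /\ Q j x)))).
    * intros x; unfold sunion, sbigcup, sinter; split.
      -- intros [[n [j [_ [[h1 _] h2]]]]|[h1 [h2 _]]]; auto.
      -- intros [h1 h2]. destruct (classic (exists n j, In j (l n) /\ Q j x)) as [[n [j [hj hq]]]|hn].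
         ++ left. exists n, j. auto.
         ++ right. auto.
    * apply M_union.
      -- apply M_bigcup. intros n. apply M_list. intros j _. apply M_inter; auto.
      -- apply M_of_N. apply (N_sub EX _ _ HRN). intros x [_ h]; auto.
- intros A. split.
  + intros HA j. apply (N_sub EX _ _ HA). intros x [h _]; auto.
  + intros HA. apply (proj2 (LDX A)). intros F HF.
    destruct (Hcov F HF) as [l [HUM HRN]].
    apply (N_sub EX _ (sunion (sbigcup (fun n x => exists j, In j (l n) /\ sinter A (Q j) x))
                              (fun x => F x /\ ~ exists n j, In j (l n) /\ Q j x))).
    * apply N_union; auto. apply N_bigcup. intros n. apply (N_list EX _ _ sempty HN0X). intros j _; auto.
    * intros x [h1 h2]. destruct (classic (exists n j, In j (l n) /\ Q j x)) as [[n [j [hj hq]]]|hn].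
      -- left. exists n, j. split; auto. split; auto.
      -- right. auto.
Qed.

End Iso.

Theorem mainTheorem18 (X Y : Type) (EX : ems X) (EY : ems Y) (f : X -> option Y) :
  ems_iso EX EY f ->
  locally_determined EX -> locally_determined EY ->
  ems_compact EY -> strictly_localizable EY ->
  ems_compact EX /\ strictly_localizable EX.
Proof.
intros [Hf [g [Hg [Hgf Hfg]]]] LDX LDY HC HSL. split.
- exact (compact_X EX EY f g Hf Hg Hgf Hfg HC HSL).
- exact (sl_X EX EY f g Hf Hg Hgf Hfg LDX HSL).
Qed.
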